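(* Let $n\ge1$, $q$ a prime power, and $\mathcal{F}$ a covering of $[n]$ with no redundant basic set. If there are $A,B\in\mathcal{F}$ with $|A|\neq|B|$, then the $\mathcal{F}$-combinatorial metric does not satisfy the MacWilliams Extension Property.
   Context: For a covering $\mathcal{F}$ of $[n]$ (subsets called basic sets, union $[n]$) and $x\in\mathbb{F}_q^n$, $\mathrm{wt}_{\mathcal{F}}(x)=\min\{|\mathcal{A}|:\mathcal{A}\subset\mathcal{F},\ \mathrm{supp}(x)\subset\bigcup_{A\in\mathcal{A}}A\}$ with $\mathrm{supp}(x)=\{i:x_i\ne0\}$, and $d_{\mathcal{F}}(x,y)=\mathrm{wt}_{\mathcal{F}}(x-y)$. A basic set is redundant if properly contained in another. A local $\mathcal{F}$-equivalence between linear codes $\mathcal{C}_1,\mathcal{C}_2\subset\mathbb{F}_q^n$ is a linear map $t:\mathcal{C}_1\to\mathcal{C}_2$ with $\mathrm{wt}_{\mathcal{F}}(t(c))=\mathrm{wt}_{\mathcal{F}}(c)$ for all $c\in\mathcal{C}_1$. The metric $d_{\mathcal{F}}$ satisfies the MacWilliams Extension Property if for all linear codes $\mathcal{C}_1,\mathcal{C}_2$, every local $\mathcal{F}$-equivalence $t:\mathcal{C}_1\to\mathcal{C}_2$ extends to a linear isometry $T$ of $(\mathbb{F}_q^n,d_{\mathcal{F}})$, i.e. $T(c)=t(c)$ for all $c\in\mathcal{C}_1$. *)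

(* Defs.v *)
From HB Require Import structures.
From mathcomp Require Import all_boot all_order all_algebra all_field.
Set Implicit Arguments. Unset Strict Implicit. Unset Printing Implicit Defensive.
Import GRing.Theory.
Local Open Scope ring_scope.

Definition is_covering (n : nat) (F : {set {set 'I_n}}) : Prop :=
  \bigcup_(A in F) A = [set: 'I_n].

Definition no_redundant (n : nat) (F : {set {set 'I_n}}) : Prop :=
  forall A B, A \in F -> B \in F -> ~~ (A \proper B).

Section CombMetric.
Variables (K : fieldType) (n : nat).

Definition supp (x : 'rV[K]_n) : {set 'I_n} := [set i | x 0 i != 0].

(* wt_F(x) = min { |S| : S subset of F, supp x covered by the union of S }.
   The default #|F| is attained when F is a covering (S = F). *)
Definition wtF (F : {set {set 'I_n}}) (x : 'rV[K]_n) : nat :=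
  \big[minn/#|F|]_(S : {set {set 'I_n}} |
      (S \subset F) && (supp x \subset \bigcup_(A in S) A)) #|S|.

Definition dF (F : {set {set 'I_n}}) (x y : 'rV[K]_n) : nat := wtF F (x - y).

(* local F-equivalence t : C1 -> C2 (t is given as a linear map on the
   ambient space, only its restriction to C1 matters) *)
Definition local_equiv (F : {set {set 'I_n}}) (C1 C2 : {vspace 'rV[K]_n})
    (t : 'End('rV[K]_n)) : Prop :=
  (t @: C1 <= C2)%VS /\ forall c, c \in C1 -> wtF F (t c) = wtF F c.

Definition linear_isometry (F : {set {set 'I_n}}) (T : 'End('rV[K]_n)) : Prop :=
  forall x y, dF F (T x) (T y) = dF F x y.

Definition MacWilliams_extension_property (F : {set {set 'I_n}}) : Prop :=
  forall (C1 C2 : {vspace 'rV[K]_n}) (t : 'End('rV[K]_n)),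
    local_equiv F C1 C2 t ->
    exists T : 'End('rV[K]_n),
      linear_isometry F T /\ forall c, c \in C1 -> T c = t c.

End CombMetric.

(* Main.v *)
Require Import Defs.
From mathcomp Require Import all_boot all_order all_algebra all_field.
Set Implicit Arguments. Unset Strict Implicit. Unset Printing Implicit Defensive.
Import GRing.Theory.
Local Open Scope ring_scope.

Section Aux.
Variables (K : finFieldType) (n : nat) (F : {set {set 'I_n}}).
Hypothesis Fcov : is_covering F.

Definition feas (x : 'rV[K]_n) (S : {set {set 'I_n}}) :=
  (S \subset F) && (supp x \subset \bigcup_(A in S) A).

Lemma bigmin_seq_le (I : eqType) (r : seq I) (P : pred I) (f : I -> nat) d j :
  j \in r -> P j -> (\big[minn/d]_(i <- r | P i) f i <= f j)%N.
Proof.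
elim: r => // a r IH; rewrite inE big_cons => /orP[/eqP-> Pj | jr Pj].
  by rewrite Pj geq_minl.
case: (P a); last exact: IH.
by apply: leq_trans (geq_minr _ _) (IH jr Pj).
Qed.

Lemma wt_le (x : 'rV[K]_n) S : feas x S -> (wtF F x <= #|S|)%N.
Proof.
move=> HS; rewrite /wtF; apply: bigmin_seq_le => //; exact: mem_index_enum.
Qed.

Lemma wt_ex (x : 'rV[K]_n) : exists S, feas x S /\ (#|S| <= wtF F x)%N.
Proof.
rewrite /wtF; apply: (big_ind (fun m => exists S, feas x S /\ (#|S| <= m)%N)).
- exists F; rewrite /feas subxx /= leqnn; split => //.
  by move: Fcov; rewrite /is_covering => ->; rewrite subsetT.
- move=> m1 m2 [S1 [H1 L1]] [S2 [H2 L2]].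
  case: (leqP m1 m2) => h.
  + by exists S1; split => //; rewrite (minn_idPl h).
  + by exists S2; split => //; rewrite (minn_idPr (ltnW h)).
- by move=> S HS; exists S.
Qed.

Lemma supp0 : @supp K n 0 = set0.
Proof. by apply/setP => i; rewrite !inE mxE eqxx. Qed.

Lemma wt0 : wtF F (0 : 'rV[K]_n) = 0%N.
Proof.
apply/eqP; rewrite -leqn0.
have := @wt_le (0 : 'rV[K]_n) set0; rewrite cards0; apply.
by rewrite /feas sub0set supp0 sub0set.
Qed.

Lemma wt_eq0 (x : 'rV[K]_n) : wtF F x = 0%N -> x = 0.
Proof.
move=> h; have [S [HS]] := wt_ex x; rewrite h leqn0 cards_eq0 => /eqP S0.
move: HS; rewrite /feas S0 big_set0 => /andP[_ /subsetP sub].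
apply/rowP => j; rewrite mxE /=.
case: (x 0 j =P 0) => // /eqP nz.
have: j \in supp x by rewrite inE.
by move/sub; rewrite inE.
Qed.

Lemma wt_le_sub (x : 'rV[K]_n) C : C \in F -> supp x \subset C -> (wtF F x <= 1)%N.
Proof.
move=> CF sC; rewrite -(cards1 C); apply: wt_le; rewrite /feas sub1set CF /=.
by rewrite big_set1.
Qed.

Lemma wt1 (x : 'rV[K]_n) C : C \in F -> x != 0 -> supp x \subset C -> wtF F x = 1%N.
Proof.
move=> CF nz sC; apply/eqP; rewrite eqn_leq; apply/andP; split.
  rewrite -(cards1 C); apply: wt_le; rewrite /feas sub1set CF /=.
  by rewrite big_set1.
rewrite lt0n; apply/eqP => /wt_eq0 h; by rewrite h eqxx in nz.
Qed.

Lemma wt_le1 (x : 'rV[K]_n) : (wtF F x <= 1)%N -> x != 0 ->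
  exists2 C, C \in F & supp x \subset C.
Proof.
move=> h nz; have [S [/andP[SF sx] L]] := wt_ex x.
have L1 : (#|S| <= 1)%N by apply: leq_trans L h.
case: (set_0Vmem S) => [S0 | [C CS]].
  move: sx; rewrite S0 big_set0 => /subsetP sub.
  case/eqP: nz; apply/rowP => j; rewrite mxE /=.
  case: (x 0 j =P 0) => // /eqP nz'.
  have: j \in supp x by rewrite inE.
  by move/sub; rewrite inE.
exists C; first by apply: (subsetP SF).
apply: (subset_trans sx); apply/bigcupsP => D DS.
by have /card_le1_eqP E := L1; rewrite (E D C DS CS).
Qed.

End Aux.

Section Main.
Variables (K : finFieldType) (n : nat) (F : {set {set 'I_n}}).
Hypothesis Fcov : is_covering F.
Hypothesis Fnr : no_redundant F.
Variables (A B : {set 'I_n}) (x0 : 'I_n).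
Hypotheses (AF : A \in F) (BF : B \in F) (ltAB : (#|A| < #|B|)%N).

Definition PA : 'M[K]_n := diag_mx (\row_i ((i \notin A)%:R)).
Definition C1 : {vspace 'rV[K]_n} := lker (linfun (mulmxr PA)).
Definition sigma (i : 'I_n) : 'I_n := nth i (enum B) (index i (enum A)).
Definition j0 : 'I_n := nth x0 (enum B) #|A|.
Definition M : 'M[K]_n := \matrix_(i, j) ((i \in A) && (sigma i == j))%:R.
Definition tt : 'End('rV[K]_n) := linfun (mulmxr M).

Lemma C1P (c : 'rV[K]_n) : reflect (forall i, i \notin A -> c 0 i = 0) (c \in C1).
Proof.
rewrite /C1 memv_ker lfunE /= mul_mx_diag.
apply: (iffP eqP) => [h i iA | h].
  by have := congr1 (fun m : 'rV[K]_n => m 0 i) h; rewrite !mxE iA mulr1.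
apply/rowP => i; rewrite !mxE; case: (boolP (i \in A)) => iA /=.
  by rewrite mulr0.
by rewrite h // mul0r.
Qed.

Lemma idxA i : i \in A -> (index i (enum A) < #|A|)%N.
Proof. by move=> iA; rewrite cardE index_mem mem_enum. Qed.

Lemma sigmaB i : i \in A -> sigma i \in B.
Proof.
move=> iA; rewrite /sigma -mem_enum mem_nth // -cardE.
exact: leq_trans (idxA iA) (ltnW ltAB).
Qed.

Lemma sigma_inj i i' : i \in A -> i' \in A -> sigma i = sigma i' -> i = i'.
Proof.
move=> iA i'A /eqP; rewrite /sigma.
have h1 := idxA iA; have h2 := idxA i'A.
rewrite (@set_nth_default _ (enum B) i' i (index i (enum A))); last by rewrite -cardE; exact: leq_trans h1 (ltnW ltAB).
rewrite nth_uniq ?enum_uniq // -?cardE; last 2 first.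
- exact: leq_trans h1 (ltnW ltAB).
- exact: leq_trans h2 (ltnW ltAB).
move/eqP=> e; rewrite -[i](@nth_index _ i i (enum A)) ?mem_enum // e.
by rewrite nth_index // mem_enum.
Qed.

Lemma j0B : j0 \in B.
Proof. by rewrite /j0 -mem_enum mem_nth // -cardE. Qed.

Lemma sigma_j0 i : i \in A -> sigma i != j0.
Proof.
move=> iA; have h1 := idxA iA; rewrite /sigma /j0.
rewrite (@set_nth_default _ (enum B) x0 i (index i (enum A))); last by rewrite -cardE; exact: leq_trans h1 (ltnW ltAB).
rewrite nth_uniq ?enum_uniq // -?cardE //; last exact: leq_trans h1 (ltnW ltAB).
by rewrite neq_ltn h1.
Qed.

Lemma MmxE (c : 'rV[K]_n) j : (c *m M) 0 j = \sum_i c 0 i * M i j.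
Proof. by rewrite mxE. Qed.

Lemma M_sigma (c : 'rV[K]_n) i : i \in A -> (c *m M) 0 (sigma i) = c 0 i.
Proof.
move=> iA; rewrite MmxE (bigD1 i) //= big1 ?addr0.
  by rewrite mxE iA eqxx mulr1.
move=> i' ne; rewrite mxE; case: (boolP (i' \in A)) => i'A /=; last by rewrite mulr0.
case: eqP => [e|]; last by rewrite mulr0.
by case/eqP: ne; apply: sigma_inj.
Qed.

Lemma M_outB (c : 'rV[K]_n) k : k \notin B -> (c *m M) 0 k = 0.
Proof.
move=> kB; rewrite MmxE big1 // => i _; rewrite mxE.
case: (boolP (i \in A)) => iA /=; last by rewrite mulr0.
case: eqP => [e|]; last by rewrite mulr0.
by rewrite -e sigmaB in kB.
Qed.

Lemma M_j0 (c : 'rV[K]_n) : (c *m M) 0 j0 = 0.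
Proof.
rewrite MmxE big1 // => i _; rewrite mxE.
case: (boolP (i \in A)) => iA /=; last by rewrite mulr0.
by rewrite (negbTE (sigma_j0 iA)) mulr0.
Qed.

Lemma supp_M (c : 'rV[K]_n) : supp (c *m M) \subset B.
Proof.
apply/subsetP => k; rewrite inE; apply: contraR => kB.
by rewrite M_outB.
Qed.

Lemma local_tt : local_equiv F C1 fullv tt.
Proof.
split; first exact: subvf.
move=> c /C1P cC; rewrite lfunE /=.
case: (eqVneq c 0) => [->|nz]; first by rewrite mul0mx !wt0.
have sA : supp c \subset A.
  apply/subsetP => i; rewrite inE; apply: contraR => iA; by rewrite cC.
have [i ci] : exists i, c 0 i != 0.
  apply/existsP; apply: contraR nz; rewrite negb_exists => /forallP h.
  by apply/eqP/rowP => j; rewrite mxE; move: (h j); rewrite negbK => /eqP.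
have iA : i \in A by move/subsetP: sA; apply; rewrite inE.
rewrite (wt1 Fcov BF _ (supp_M c)) ?(wt1 Fcov AF nz sA) //.
by apply: contra ci => /eqP e; rewrite -(M_sigma c iA) e mxE.
Qed.

Lemma main_contra : ~ MacWilliams_extension_property K F.
Proof.
move=> MEP; have [T [iso ext]] := MEP C1 fullv tt local_tt.
have T0 : T 0 = 0 by rewrite linear0.
have wtT x : wtF F (T x) = wtF F x.
  by have := iso x 0; rewrite /dF T0 !subr0.
have Tinj : injective (fun x => T x).
  move=> x y /= e; have := iso x y; rewrite /dF e subrr wt0 => /esym/(wt_eq0 Fcov).
  by move/eqP; rewrite subr_eq0 => /eqP.
have [g Tg gT] := injF_bij Tinj.
pose u : 'rV[K]_n := delta_mx 0 j0.
pose w := g u.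
have Tw : T w = u by rewrite /w gT.
have /existsP [i0 /andP [i0A wi0]] : [exists i0, (i0 \notin A) && (w 0 i0 != 0)].
  apply: contraT; rewrite negb_exists => /forallP h.
  have wC : w \in C1.
    apply/C1P => i iA; move: (h i); rewrite negb_and iA /= negbK => /eqP //.
  have := ext w wC; rewrite Tw lfunE /= => /(congr1 (fun m : 'rV[K]_n => m 0 j0)).
  rewrite M_j0 mxE !eqxx /= => e; move: e; rewrite ?mulr1n => /eqP; by rewrite oner_eq0.
pose v : 'rV[K]_n := \row_i (if i \in A then 1 - w 0 i else 0).
have vC : v \in C1 by apply/C1P => i iA; rewrite mxE (negbTE iA).
have Tvw : T (v + w) = v *m M + u.
  have -> : T (v + w) = T v + T w by exact: linearD.
  by rewrite Tw ext // lfunE.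
have le1 : (wtF F (v + w) <= 1)%N.
  rewrite -wtT Tvw; apply: (wt_le_sub BF).
  apply/subsetP => k; rewrite inE; apply: contraR => kB.
  have kj : k != j0 by apply: contraNneq kB => ->; exact: j0B.
  by rewrite mxE M_outB // mxE (negbTE kj) andbF add0r ?mulr0n.
have vw_i0 : (v + w) 0 i0 = w 0 i0 by rewrite !mxE (negbTE i0A) add0r.
have nz : v + w != 0.
  by apply: contra wi0 => /eqP e; rewrite -vw_i0 e mxE.
have [C CF sC] := wt_le1 Fcov le1 nz.
have AC : A \subset C.
  apply/subsetP => i iA; move/subsetP: sC; apply.
  by rewrite inE !mxE iA subrK oner_eq0.
have i0C : i0 \in C by move/subsetP: sC; apply; rewrite inE vw_i0.
have := Fnr AF CF; rewrite properE AC /=.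
by apply/negP; rewrite negbK; apply/negP => /subsetP /(_ _ i0C); apply/negP.
Qed.

End Main.

Theorem proposition7 (K : finFieldType) (n : nat) (F : {set {set 'I_n}}) :
  (0 < n)%N ->
  is_covering F ->
  no_redundant F ->
  (exists A B, A \in F /\ B \in F /\ #|A| <> #|B|) ->
  ~ MacWilliams_extension_property K F.
Proof.
move=> hn cov nr [A [B [AF [BF ne]]]].
case: (ltngtP #|A| #|B|) => h; last by [].
- exact: (main_contra cov nr (Ordinal hn) AF BF h).
- exact: (main_contra cov nr (Ordinal hn) BF AF h).
Qed.
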